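(* For $k\geq1$, the star $K_{1,k+2}$ has spectator floor $k$ and is minor-minimal among graphs with spectator floor $k$ (no proper minor of it has spectator floor $k$).
   Context: All graphs are finite, have at least one vertex, have no loops, and may have multiple (parallel) edges. A minor of $H$ is any graph obtained from $H$ by a sequence of: deleting an isolated vertex, deleting an edge, contracting an edge that has no edge parallel to it. A unique shortest path is a shortest $u$–$v$ path $P$ such that every $u$–$v$ path with the same number of vertices is identical to $P$, where two paths with different edge sequences are different even if their vertex sequences agree; a single vertex is a unique shortest path. The parade number $\mathrm{usp}(G)$ is the largest number of vertices of a unique shortest path in $G$. The spectator number is $\mathrm{sp}(G)=|V(G)|-\mathrm{usp}(G)$. The spectator floor $\lfloor \mathrm{sp}\rfloor(G)$ is the minimum of $\mathrm{sp}(H)$ over all graphs $H$ of which $G$ is a minor. *)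

(* Defs.v *)
From mathcomp Require Import all_boot.
Set Implicit Arguments. Unset Strict Implicit. Unset Printing Implicit Defensive.

(* Finite multigraphs without loops.                                   *)
(* edges are identified by their position in the list, so parallel    *)
(* edges are distinct edges.                                           *)
Record graph := Graph { gnv : nat; gedges : seq (nat * nat) }.

Definition edge_ok (n : nat) (e : nat * nat) : bool :=
  [&& e.1 < n, e.2 < n & e.1 != e.2].

Definition wf (G : graph) : bool := (0 < gnv G) && all (edge_ok (gnv G)) (gedges G).

Definition unord (e : nat * nat) : nat * nat := (minn e.1 e.2, maxn e.1 e.2).

Definition nth_edge (G : graph) (i : nat) : nat * nat := nth (0, 0) (gedges G) i.

Definition iso (G H : graph) : Prop :=
  gnv G = gnv H /\
  exists f : nat -> nat,
    (forall x, x < gnv G -> f x < gnv H) /\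
    {in [pred x | x < gnv G] &, injective f} /\
    perm_eq [seq unord (f e.1, f e.2) | e <- gedges G] [seq unord e | e <- gedges H].

(* renumbering after deleting vertex v *)
Definition shiftv (v w : nat) : nat := if v < w then w.-1 else w.

Definition rm_nth (T : Type) (i : nat) (s : seq T) : seq T := take i s ++ drop i.+1 s.

Inductive minor_step : graph -> graph -> Prop :=
| DelIsolated (G : graph) (v : nat) :
    v < gnv G -> 1 < gnv G ->
    all (fun e : nat * nat => (e.1 != v) && (e.2 != v)) (gedges G) ->
    minor_step G (Graph (gnv G).-1
                        [seq (shiftv v e.1, shiftv v e.2) | e <- gedges G])
| DelEdge (G : graph) (i : nat) :
    i < size (gedges G) ->
    minor_step G (Graph (gnv G) (rm_nth i (gedges G)))
| Contract (G : graph) (i : nat) :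
    i < size (gedges G) ->
    (forall j, j < size (gedges G) -> j != i ->
       unord (nth_edge G j) != unord (nth_edge G i)) ->
    let u := (nth_edge G i).1 in
    let v := (nth_edge G i).2 in
    let ren := fun w => if w == v then u else w in
    minor_step G (Graph (gnv G).-1
                        [seq (shiftv v (ren e.1), shiftv v (ren e.2))
                        | e <- rm_nth i (gedges G)]).

Inductive steps : graph -> graph -> Prop :=
| steps_refl G : steps G G
| steps_cons G1 G2 G3 : minor_step G1 G2 -> steps G2 G3 -> steps G1 G3.

Definition minor (G H : graph) : Prop := exists H', steps H H' /\ iso H' G.

Definition proper_minor (G H : graph) : Prop :=
  exists H1 H', minor_step H H1 /\ steps H1 H' /\ iso H' G.

(* Paths: p = (vertex sequence x_0..x_m, edge index sequence e_1..e_m) *)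
Definition is_path (G : graph) (u v : nat) (p : seq nat * seq nat) : Prop :=
  let vs := p.1 in let es := p.2 in
  size vs = (size es).+1 /\
  uniq vs /\
  all (fun x => x < gnv G) vs /\
  all (fun e => e < size (gedges G)) es /\
  (forall i, i < size es ->
     unord (nth_edge G (nth 0 es i)) = unord (nth 0 vs i, nth 0 vs i.+1)) /\
  nth 0 vs 0 = u /\
  nth 0 vs (size es) = v.

Definition pnv (p : seq nat * seq nat) : nat := size p.1.

Definition is_usp (G : graph) (p : seq nat * seq nat) : Prop :=
  let u := nth 0 p.1 0 in let v := nth 0 p.1 (size p.2) in
  [/\ is_path G u v p,
      (forall q, is_path G u v q -> pnv p <= pnv q) &
      (forall q, is_path G u v q -> pnv q = pnv p -> q = p)].

Definition usp_is (G : graph) (m : nat) : Prop :=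
  (exists p, is_usp G p /\ pnv p = m) /\
  (forall p, is_usp G p -> pnv p <= m).

Definition sp_is (G : graph) (s : nat) : Prop :=
  exists m, usp_is G m /\ s = gnv G - m.

Definition spfloor_is (G : graph) (k : nat) : Prop :=
  (exists H, wf H /\ minor G H /\ sp_is H k) /\
  (forall H s, wf H -> minor G H -> sp_is H s -> k <= s).

Definition star (n : nat) : graph :=
  Graph n.+1 [seq (0, i.+1) | i <- iota 0 n].

(* Main.v *)
Require Import Defs.
From mathcomp Require Import all_boot.
From mathcomp Require Import zify.
Set Implicit Arguments. Unset Strict Implicit. Unset Printing Implicit Defensive.

Lemma unord_sym a b : unord (a,b) = unord (b,a).
Proof. by rewrite /unord /= minnC maxnC. Qed.

Lemma unordP e x y : unord e = unord (x,y) -> e = (x,y) \/ e = (y,x).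
Proof.
case: e => a b; rewrite /unord /= => -[h1 h2].
have : (a = x /\ b = y) \/ (a = y /\ b = x) by lia.
by case=> -[-> ->]; [left|right].
Qed.

Definition adj (G : graph) x y := has (fun e => unord e == unord (x,y)) (gedges G).

Lemma adjP G x y : reflect (exists2 e, e \in gedges G & (e = (x,y) \/ e = (y,x))) (adj G x y).
Proof.
apply: (iffP hasP) => -[e He H]; exists e => //.
  by apply: unordP; apply/eqP.
by case: H => ->; rewrite ?eqxx // unord_sym eqxx.
Qed.

Lemma adj_sym G x y : adj G x y = adj G y x.
Proof. by rewrite /adj unord_sym. Qed.

Lemma adj_lt G x y : wf G -> adj G x y -> x < gnv G /\ y < gnv G.
Proof.
case/andP=> _ /allP Hw /adjP[e /Hw]; rewrite /edge_ok => /and3P[h1 h2 _].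
by case=> E; subst e; simpl in *; split.
Qed.

Fixpoint ball (H : graph) (r : nat) (j : nat) (y : nat) : bool :=
  if j is j'.+1 then ball H r j' y ||
     has (fun e => (ball H r j' e.2 && (e.1 == y)) || (ball H r j' e.1 && (e.2 == y))) (gedges H)
  else y == r.

Lemma ball_mono H r j y : ball H r j y -> ball H r j.+1 y.
Proof. by move=> h; rewrite /= h. Qed.

Lemma ball_adj H r j x y : adj H x y -> ball H r j x -> ball H r j.+1 y.
Proof.
move=> /adjP[e He Hxy] Hx /=; apply/orP; right; apply/hasP; exists e => //.
by case: Hxy => -> /=; rewrite Hx eqxx ?orbT.
Qed.

Lemma ball_path H r : wf H -> r < gnv H -> forall j y, ball H r j y ->
  exists q, is_path H y r q /\ size q.1 <= j.+1 /\ all (ball H r j) q.1.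
Proof.
move=> Hwf Hr; elim=> [|j IH] y /=.
  move/eqP=> ->; exists ([:: r], [::]); rewrite /is_path /=.
  by do !split => //; rewrite ?Hr ?eqxx.
case Hy: (ball H r j y) => /=.
  move=> _; case: (IH y Hy) => q [Hq [Hs Ha]]; exists q; do !split => //.
    by apply: leqW.
  by apply: sub_all Ha => z Hz; rewrite /= Hz.
case/hasP=> e He Hor.
have [w [Hw Hew]] : exists w, ball H r j w /\ (e = (y,w) \/ e = (w,y)).
  case: e He Hor => e1 e2 He /= /orP[] /andP[Hb /eqP Heq]; subst.
    by exists e2; split => //; left.
  by exists e1; split => //; right.
have Hadj : adj H w y by apply/adjP; exists e => //; case: Hew; [right|left].
have Hyn : y < gnv H by case: (adj_lt Hwf Hadj).
case: (IH w Hw) => [[vs es] [[Hsz [Hu [Hall [Hes [Hedge [H0 Hl]]]]]] [Hs Ha]]].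
simpl in *.
exists (y :: vs, index e (gedges H) :: es); rewrite /is_path /=.
do !split.
- by rewrite Hsz.
- rewrite Hu andbT; apply/negP => Hin.
  by move/allP: Ha => /(_ _ Hin); rewrite Hy.
- by rewrite Hyn Hall.
- by rewrite index_mem He Hes.
- case=> [|i] /=; last by move=> hi; apply: Hedge.
  move=> _; rewrite /nth_edge nth_index // H0.
  by case: Hew => ->; rewrite // unord_sym.
- by [].
- by [].
- have := ball_adj Hadj Hw; rewrite /= => ->; rewrite /=.
  by apply: sub_all Ha => z Hz; rewrite /= Hz.
Qed.

Definition dist H r m y := find (fun j => ball H r j y) (iota 0 m).

Lemma dist_le H r m j y : ball H r j y -> dist H r m y <= j.
Proof.
move=> Hb; rewrite /dist; case: (ltnP j m) => Hj.
  rewrite leqNgt; apply/negP => Hlt.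
  by have := before_find 0 Hlt; rewrite nth_iota // add0n Hb.
by apply: leq_trans (find_size _ _) _; rewrite size_iota.
Qed.

Lemma dist_ball H r m y : dist H r m y < m -> ball H r (dist H r m y) y.
Proof.
move=> h.
have Hh : has (fun j => ball H r j y) (iota 0 m) by rewrite has_find size_iota.
by have := nth_find 0 Hh; rewrite nth_iota // add0n.
Qed.

Lemma dist_bound H r m y : dist H r m y <= m.
Proof. by rewrite /dist; apply: leq_trans (find_size _ _) _; rewrite size_iota. Qed.

Lemma dist_lip H r m x y : adj H x y -> dist H r m y <= (dist H r m x).+1.
Proof.
move=> Ha; case: (ltnP (dist H r m x) m) => h.
  by apply: dist_le; apply: ball_adj Ha (dist_ball h).
by apply: leq_trans (dist_bound _ _ _ _) _; apply: leq_trans h _.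
Qed.

Definition conn G (C : nat -> bool) := forall A : nat -> bool,
  (exists x, C x && A x) -> (exists y, C y && ~~ A y) ->
  exists x y, [&& C x, C y, A x, ~~ A y & adj G x y].

Definition model G n := exists C, conn G C /\ exists N : seq nat,
  [/\ uniq N, size N = n & forall y, y \in N -> ~~ C y /\ exists x, C x /\ adj G x y].

Lemma path_adj G u v p i : is_path G u v p -> i < size p.2 ->
  adj G (nth 0 p.1 i) (nth 0 p.1 i.+1).
Proof.
case: p => vs es [_ [_ [_ [Hes [Hedge _]]]]] /= Hi.
apply/hasP; exists (nth_edge G (nth 0 es i)); last by rewrite Hedge ?eqxx.
by rewrite /nth_edge mem_nth //; move/allP: Hes; apply; rewrite mem_nth.
Qed.

Lemma count_le1 (s : seq nat) (P : pred nat) : uniq s ->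
  (forall x y, x \in s -> y \in s -> P x -> P y -> x = y) -> count P s <= 1.
Proof.
move=> Hu Hx; rewrite -size_filter.
have Hu' : uniq [seq x <- s | P x] by rewrite filter_uniq.
have Hm : forall x, x \in [seq x <- s | P x] -> (x \in s) && P x.
  by move=> x; rewrite mem_filter andbC.
move: Hu' Hm; case: [seq x <- s | P x] => [|a [|b t]] //= Hu' Hm.
case/andP: (Hm a (mem_head _ _)) => a1 a2.
have hb : b \in [:: a, b & t] by rewrite inE mem_head orbT.
case/andP: (Hm b hb) => b1 b2.
have eab := Hx a b a1 b1 a2 b2; subst b.
by move: Hu'; rewrite inE eqxx.
Qed.

Lemma choice_map (phi : nat -> nat) (Q : nat -> Prop) (s : seq nat) :
  (forall a, a \in s -> exists b, phi b = a /\ Q b) ->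
  exists t, map phi t = s /\ forall b, b \in t -> Q b.
Proof.
elim: s => [|a s IH] H; first by exists [::].
case: (H a (mem_head _ _)) => b [Hb Qb].
case: IH => [c Hc|t [Ht Qt]]; first by apply: H; rewrite inE Hc orbT.
exists (b :: t); split; first by rewrite /= Hb Ht.
by move=> x; rewrite inE => /orP[/eqP ->|/Qt].
Qed.

Lemma path_size G u v p : is_path G u v p -> size p.1 <= gnv G.
Proof.
case: p => vs es [_ [Hu [Hall _]]] /=.
rewrite -(size_iota 0 (gnv G)); apply: uniq_leq_size => // x Hx.
by rewrite mem_iota /=; move/allP: Hall => /(_ _ Hx).
Qed.

Lemma lower_bound H p n : wf H -> is_usp H p -> model H n -> n - 2 <= gnv H - pnv p.
Proof.
move=> Hwf; case: p => vs es; rewrite /is_usp /pnv /= => -[Hp Hmin _].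
move: (Hp) => [Hsz [Hu [Hall [Hes [Hedge [H0 Hl]]]]]].
simpl in *.
set L := size es in Hsz Hedge Hl Hmin Hp.
set u := nth 0 vs 0 in Hmin Hp.
set r := nth 0 vs L in Hmin Hp.
set m := size vs.
set d := dist H r m.
have Hr : r < gnv H.
  by move/allP: Hall; apply; rewrite /r mem_nth // Hsz.
have dv : d r = 0.
  by apply/eqP; rewrite -leqn0; apply: (@dist_le H r m 0); rewrite /= eqxx.
have dlip : forall x y, adj H x y -> d y <= (d x).+1 by move=> x y; apply: dist_lip.
have padj : forall i, i < L -> adj H (nth 0 vs i) (nth 0 vs i.+1).
  by move=> i Hi; apply: (path_adj Hp).
have dup : forall t, t <= L -> d (nth 0 vs (L - t)) <= t.
  elim=> [|t IH] Ht; first by rewrite subn0 -/r dv.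
  have h1 : L - t.+1 < L by lia.
  have h2 : (L - t.+1).+1 = L - t by lia.
  have := padj _ h1; rewrite h2 adj_sym => /dlip.
  by have := IH (ltnW Ht); lia.
have du : L <= d u.
  have hlt : d u < m by have := dup L (leqnn _); rewrite subnn -/u /m Hsz; lia.
  have := dist_ball hlt; rewrite -/d => /(ball_path Hwf Hr) [q [Hq [Hs _]]].
  have := Hmin q Hq; rewrite /pnv Hsz; lia.
have dlow : forall i, i <= L -> d u <= d (nth 0 vs i) + i.
  elim=> [|i IH] Hi; first by rewrite addn0.
  have := padj _ Hi; rewrite adj_sym => /dlip; have := IH (ltnW Hi); lia.
have dvs : forall i, i <= L -> d (nth 0 vs i) = L - i.
  move=> i Hi; have := dup (L - i); have := dlow i Hi.
  have -> : L - (L - i) = i by lia.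
  lia.
have dinj : forall x y, x \in vs -> y \in vs -> d x = d y -> x = y.
  move=> x y Hx Hy.
  rewrite -(nth_index 0 Hx) -(nth_index 0 Hy).
  have := index_mem x vs; have := index_mem y vs; rewrite Hx Hy Hsz.
  move=> iy ix; rewrite !dvs; try lia.
  move=> e; have -> : index x vs = index y vs by lia.
  by [].
case=> C [Hc [N [HuN HsN HN]]].
set NP := [seq y <- N | y \in vs].
set NS := [seq y <- N | y \notin vs].
have NPvs : forall y, y \in NP -> y \in vs by move=> y; rewrite mem_filter => /andP[].
have NPN : forall y, y \in NP -> y \in N by move=> y; rewrite mem_filter => /andP[].
have uNP : uniq NP by rewrite filter_uniq.
pose interior y := has (fun a => d a < d y) NP && has (fun b => d y < d b) NP.
set NPi := [seq y <- NP | interior y].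
have claim1 : size NP <= size NPi + 2.
  rewrite /NPi size_filter -(count_predC interior NP).
  pose P1 y := ~~ has (fun a => d a < d y) NP.
  pose P2 y := ~~ has (fun b => d y < d b) NP.
  have e1 : count (predC interior) NP = count (predU P1 P2) NP.
    by apply: eq_count => y; rewrite /= /interior /P1 /P2 negb_and.
  have c1 : count P1 NP <= 1.
    apply: count_le1 => // x y Hx Hy /hasPn Px /hasPn Py.
    apply: dinj; try by apply: NPvs.
    have := Px y Hy; have := Py x Hx; rewrite -!leqNgt; lia.
  have c2 : count P2 NP <= 1.
    apply: count_le1 => // x y Hx Hy /hasPn Px /hasPn Py.
    apply: dinj; try by apply: NPvs.
    have := Px y Hy; have := Py x Hx; rewrite -!leqNgt; lia.
  have := count_predUI P1 P2 NP; rewrite e1 (_ : count (fun x => interior x) NP = count interior NP) //; lia.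
have claim2 : forall y, y \in NPi ->
    exists c, d c = d y /\ (C c /\ c \notin vs /\ c < gnv H).
  move=> y; rewrite mem_filter => /andP[/andP[/hasP[a Ha Hay] /hasP[b Hb Hyb]] Hy].
  have [xa [Cxa Axa]] := (HN a (NPN _ Ha)).2.
  have [xb [Cxb Axb]] := (HN b (NPN _ Hb)).2.
  have la : d xa <= (d a).+1 by apply: dlip; rewrite adj_sym.
  have lb := dlip _ _ Axb.
  suff [c [Cc [dc cn]]] : exists c, C c /\ d c = d y /\ c < gnv H.
    exists c; split => //; split => //; split => //.
    apply/negP => cv; have := dinj _ _ cv (NPvs _ Hy) dc => ecy.
    by have := (HN y (NPN _ Hy)).1; rewrite -ecy Cc.
  case: (ltnP (d xa) (d y)) => h; last first.
    exists xa; split => //; split.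
      by apply/eqP; rewrite eqn_leq h andbT; apply: leq_trans la _.
    by case: (adj_lt Hwf Axa).
  have hb : ~~ (d xb < d y) by rewrite -leqNgt; exact: leq_trans Hyb lb.
  have [x [z /and5P[Cx Cz Ax Az Axz]]] := Hc (fun x => d x < d y)
     (ex_intro _ xa (introT andP (conj Cxa h)))
     (ex_intro _ xb (introT andP (conj Cxb hb))).
  exists z; split => //; split.
    rewrite -leqNgt in Az; apply/eqP; rewrite eqn_leq Az andbT.
    exact: leq_trans (dlip _ _ Axz) Ax.
  by case: (adj_lt Hwf Axz).
have hch : forall a, a \in map d NPi -> exists c, d c = a /\ (C c /\ c \notin vs /\ c < gnv H).
  by move=> a /mapP[y Hy ->]; apply: claim2.
have [Cs [HCs QCs]] := choice_map hch.
have NPivs : forall y, y \in NPi -> y \in vs by move=> y; rewrite mem_filter => /andP[_ /NPvs].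
have uNPi : uniq NPi by rewrite filter_uniq.
have uCs : uniq Cs.
  apply: (@map_uniq _ _ d); rewrite HCs map_inj_in_uniq // => x y Hx Hy.
  by apply: dinj; apply: NPivs.
have sCs : size Cs = size NPi by rewrite -(size_map d) HCs size_map.
pose S' := [seq w <- iota 0 (gnv H) | w \notin vs].
have sS : size S' = gnv H - m.
  rewrite /S' size_filter.
  have := count_predC (fun w => w \in vs) (iota 0 (gnv H)); rewrite size_iota.
  suff -> : count (fun w => w \in vs) (iota 0 (gnv H)) = m.
    by rewrite (_ : count (fun w => w \notin vs) _ = count (predC (fun w => w \in vs)) (iota 0 (gnv H))) //; lia.
  rewrite -size_filter; apply/perm_size; apply: uniq_perm; rewrite ?filter_uniq ?iota_uniq //.
  move=> x; rewrite mem_filter mem_iota /=; case Hx: (x \in vs) => //=.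
  by move/allP: Hall => /(_ _ Hx).
have Hsub : {subset Cs ++ NS <= S'}.
  move=> x; rewrite /S' mem_cat mem_filter mem_iota /= => /orP[/QCs [_ [-> ->]] //|].
  rewrite mem_filter => /andP[-> HxN] /=.
  by have [_ [z [_ /adj_lt]]] := HN x HxN; case/(_ Hwf).
have uL : uniq (Cs ++ NS).
  rewrite cat_uniq uCs filter_uniq // andbT; apply/hasPn => x.
  rewrite mem_filter => /andP[_ HxN]; apply/negP => /QCs [Cx _].
  by have := (HN x HxN).1; rewrite Cx.
have := uniq_leq_size uL Hsub; rewrite size_cat sS sCs.
have := count_predC (fun y => y \in vs) N; rewrite HsN -!size_filter.
rewrite (_ : [seq x <- N | predC (fun y => y \in vs) x] = NS) //.
rewrite -/NP; lia.
Qed.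

Definition unsh (v x : nat) := if v <= x then x.+1 else x.

Lemma unsh_sh v x : x != v -> unsh v (shiftv v x) = x.
Proof. rewrite /unsh /shiftv; case: ifP; case: ifP; lia. Qed.
Lemma sh_unsh v x : shiftv v (unsh v x) = x.
Proof. rewrite /unsh /shiftv; case: ifP; case: ifP; lia. Qed.
Lemma sh_lt v x n : x < n -> v < n -> x != v -> shiftv v x < n.-1.
Proof. rewrite /shiftv; case: ifP; lia. Qed.
Lemma sh_inj v x y : x != v -> y != v -> x != y -> shiftv v x != shiftv v y.
Proof. rewrite /shiftv; case: ifP; case: ifP; lia. Qed.

Lemma mem_rm_nth (T : eqType) i (s : seq T) x : x \in rm_nth i s -> x \in s.
Proof. by rewrite /rm_nth mem_cat => /orP[/mem_take|/mem_drop]. Qed.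

Lemma rm_nth_idx (T : eqType) (x0 : T) i (s : seq T) x : x \in rm_nth i s ->
  exists j, [/\ j < size s, j != i & x = nth x0 s j].
Proof.
rewrite /rm_nth mem_cat => /orP[Hx|Hx].
  have Hj := index_mem x (take i s); rewrite Hx size_take in Hj.
  exists (index x (take i s)); split.
  - by move: Hj; case: ifP => h; lia.
  - by move: Hj; case: ifP => h; lia.
  - by rewrite -{1}(nth_index x0 Hx) nth_take //; move: Hj; case: ifP => h; lia.
have Hj := index_mem x (drop i.+1 s); rewrite Hx size_drop in Hj.
exists (i.+1 + index x (drop i.+1 s)); split.
- lia.
- lia.
- by rewrite -{1}(nth_index x0 Hx) nth_drop.
Qed.

Lemma adj_map G G' (phi : nat -> nat) E0 x' y' :
  gedges G' = map (fun e => (phi e.1, phi e.2)) E0 -> {subset E0 <= gedges G} ->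
  adj G' x' y' -> exists a b, [/\ adj G a b, phi a = x', phi b = y' &
     ((a,b) \in E0 \/ (b,a) \in E0)].
Proof.
move=> HE Hsub /adjP[e']; rewrite HE => /mapP[[e1 e2] He ->] /= Hor.
have Ha : adj G e1 e2 by apply/adjP; exists (e1,e2); [apply: Hsub|left].
case: Hor => -[<- <-].
  by exists e1, e2; split => //; left.
by exists e2, e1; split => //; [rewrite adj_sym|right].
Qed.

Lemma model_pull G G' (phi : nat -> nat) (mkC : (nat -> bool) -> nat -> bool) n :
  (forall C', conn G' C' -> conn G (mkC C')) ->
  (forall C' x' y', adj G' x' y' -> exists a b,
     [/\ adj G a b, phi a = x', phi b = y', mkC C' a = C' x' & mkC C' b = C' y']) ->
  model G' n -> model G n.
Proof.
move=> Hconn Hlift [C' [Hc [N' [Hu Hs HN]]]].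
exists (mkC C'); split; first by apply: Hconn.
have hch : forall a, a \in N' -> exists b, phi b = a /\
    (~~ mkC C' b /\ exists x, mkC C' x /\ adj G x b).
  move=> y' Hy; have [nC [x' [Cx Ax]]] := HN y' Hy.
  have [a [b [Hab pa pb Ca Cb]]] := Hlift C' _ _ Ax.
  exists b; split => //; split; first by rewrite Cb.
  by exists a; rewrite Ca.
have [N [HNm HNq]] := choice_map hch.
exists N; split => //.
- by apply: (@map_uniq _ _ phi); rewrite HNm.
- by rewrite -Hs -HNm size_map.
Qed.

Lemma step_wf G G' : minor_step G G' -> wf G -> wf G'.
Proof.
case=> {G G'}.
- move=> G v Hv H1 Hall /andP[H0 /allP Hw]; rewrite /wf /=; apply/andP; split; first lia.
  apply/allP => e' /mapP[e He ->]; rewrite /edge_ok /=.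
  move/allP: Hall => /(_ _ He) /andP[n1 n2].
  case/and3P: (Hw _ He) => l1 l2 d12.
  by rewrite !sh_lt // sh_inj.
- move=> G i Hi /andP[H0 /allP Hw]; rewrite /wf /= H0 /=.
  by apply/allP => e /mem_rm_nth /Hw.
- move=> G i Hi Hnp u v ren /andP[H0 /allP Hw]; rewrite /wf /=.
  have Hei : nth_edge G i \in gedges G by rewrite mem_nth.
  case/and3P: (Hw _ Hei); rewrite -/u -/v => ul vl uv.
  apply/andP; split; first lia.
  apply/allP => e' /mapP[e He ->]; rewrite /edge_ok /=.
  have [j [Hj ji ->]] := rm_nth_idx (0,0) He.
  have Hnj := Hnp j Hj ji.
  have Hej : nth (0,0) (gedges G) j \in gedges G by rewrite mem_nth.
  case/and3P: (Hw _ Hej) => l1 l2 d12.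
  move: Hnj l1 l2 d12; rewrite /nth_edge -/u -/v.
  case: (nth (0,0) (gedges G) j) => a b /= Hnj l1 l2 d12.
  have rv : forall w, ren w != v by move=> w; rewrite /ren; case: ifP => // /negbT.
  have rl : forall w, w < gnv G -> ren w < gnv G by move=> w; rewrite /ren; case: ifP.
  rewrite !sh_lt ?rl //=; apply: sh_inj => //.
  have Hi2 : nth (0,0) (gedges G) i = (u, v) by rewrite /u /v /nth_edge -surjective_pairing.
  rewrite Hi2 in Hnj.
  rewrite /ren; case: ifP => /eqP ha; case: ifP => /eqP hb; subst => //.
  - by move: d12; rewrite eqxx.
  - by apply/negP => /eqP E; move: Hnj; rewrite -E unord_sym eqxx.
  - by apply/negP => /eqP E; move: Hnj; rewrite E eqxx.
Qed.

Lemma step_model G G' n : minor_step G G' -> wf G -> model G' n -> model G n.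
Proof.
case=> {G G'}.
-
  move=> G v Hv H1 Hall _.
  set G' := Graph _ _.
  have lift : forall x' y', adj G' x' y' -> exists a b,
      [/\ adj G a b, shiftv v a = x', shiftv v b = y', a != v & b != v].
    move=> x' y' Ha.
    have [a [b [Hab pa pb Hin]]] := @adj_map G G' (shiftv v) (gedges G) x' y' erefl (fun x h => h) Ha.
    exists a, b; split => //.
      by case: Hin => /(allP Hall) /andP[].
    by case: Hin => /(allP Hall) /andP[].
  apply: (@model_pull G G' (shiftv v) (fun C' x => (x != v) && C' (shiftv v x))).
    move=> C' Hc A [x /andP[/andP[xv Cx] Ax]] [y /andP[/andP[yv Cy] Ay]].
    have [x' [y' /and5P[Cx' Cy' Ax' Ay' Axy]]] := Hc (fun x' => A (unsh v x'))
      (ex_intro _ (shiftv v x) (introT andP (conj Cx (etrans (f_equal A (unsh_sh xv)) Ax))))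
      (ex_intro _ (shiftv v y) (introT andP (conj Cy (etrans (f_equal (fun b => ~~ A b) (unsh_sh yv)) Ay)))).
    have [a [b [Hab pa pb av bv]]] := lift _ _ Axy.
    exists a, b; subst x' y'; rewrite Hab av bv Cx' Cy' /=.
    by rewrite (unsh_sh av) (unsh_sh bv) in Ax' Ay'; rewrite Ax' Ay'.
  move=> C' x' y' Axy; have [a [b [Hab pa pb av bv]]] := lift _ _ Axy.
  by exists a, b; split => //; rewrite ?av ?bv /= ?pa ?pb.
-
  move=> G i Hi _; apply: (@model_pull _ _ id id).
    move=> C Hc A Hx Hy; have [x [y /and5P[Cx Cy Ax Ay Axy]]] := Hc A Hx Hy.
    exists x, y; rewrite Cx Cy Ax Ay /=.
    by move: Axy; rewrite /adj /= => /hasP[e /mem_rm_nth He Hee]; apply/hasP; exists e.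
  move=> C x y Axy; exists x, y; split => //.
  by move: Axy; rewrite /adj /= => /hasP[e /mem_rm_nth He Hee]; apply/hasP; exists e.
-
  move=> G i Hi Hnp u v ren Hwf.
  set G' := Graph _ _.
  set phi := fun w => shiftv v (ren w).
  have lift : forall x' y', adj G' x' y' -> exists a b,
      [/\ adj G a b, phi a = x' & phi b = y'].
    move=> x' y' Ha.
    have [a [b [Hab pa pb _]]] := @adj_map G G' phi (rm_nth i (gedges G)) x' y' erefl
      (fun x h => mem_rm_nth h) Ha.
    by exists a, b.
  have Hi2 : nth_edge G i = (u, v) by rewrite /u /v -surjective_pairing.
  have Auv : adj G u v.
    by apply/adjP; exists (u, v); [rewrite -Hi2 mem_nth | left].
  have uv : u != v.
    case/andP: Hwf => _ /allP Hw.
    have := Hw (nth_edge G i); rewrite Hi2 /edge_ok /= => /(_ _) /and3P[] //.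
    by rewrite -Hi2 mem_nth.
  have phiuv : phi u = phi v.
    by rewrite /phi /ren eqxx (negbTE uv).
  apply: (@model_pull G G' phi (fun C' x => C' (phi x))); last first.
    move=> C' x' y' Axy; have [a [b [Hab pa pb]]] := lift _ _ Axy.
    by exists a, b; split => //; rewrite ?pa ?pb.
  move=> C' Hc A [x /andP[Cx Ax]] [y /andP[Cy Ay]].
  case Hcu: (C' (phi u) && (A u != A v)).
    case/andP: Hcu => Cu Auv'.
    case HAu: (A u); move: Auv'; rewrite HAu => HAv.
      by exists u, v; rewrite /= Cu -phiuv Cu HAu HAv Auv.
    exists v, u; rewrite /= Cu -phiuv Cu adj_sym Auv HAu.
    by move: HAv; case: (A v).
  have key : forall w, C' (phi w) -> A (unsh v (phi w)) = A w.
    move=> w Cw; case: (eqVneq w v) => [E|wv].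
      subst w; rewrite -phiuv /phi /ren (negbTE uv) unsh_sh //.
      move: Hcu; rewrite phiuv Cw /=.
      by case: (A u); case: (A v).
    by rewrite /phi /ren (negbTE wv) unsh_sh.
  have [x' [y' /and5P[Cx' Cy' Ax' Ay' Axy]]] := Hc (fun x' => A (unsh v x'))
      (ex_intro _ (phi x) (introT andP (conj Cx (etrans (key _ Cx) Ax))))
      (ex_intro _ (phi y) (introT andP (conj Cy (etrans (f_equal negb (key _ Cy)) Ay)))).
  have [a [b [Hab pa pb]]] := lift _ _ Axy.
  subst x' y'.
  by exists a, b; rewrite Hab Cx' Cy' -(key _ Cx') -(key _ Cy') Ax' Ay'.
Qed.

Lemma iso_star_model H n : wf H -> iso H (star n) -> model H n.
Proof.
move=> Hwf [Hn [f [Hf [Hinj Hperm]]]].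
pose C x := (x < gnv H) && (f x == 0).
exists C; split.
  move=> A [x /andP[/andP[xl fx] Ax]] [y /andP[/andP[yl fy] Ay]].
  have exy : x = y by apply: Hinj; rewrite ?inE // (eqP fx) (eqP fy).
  by subst; rewrite Ax in Ay.
have hch : forall a, a \in map succn (iota 0 n) ->
    exists b, f b = a /\ (~~ C b /\ exists x, C x /\ adj H x b).
  move=> a /mapP[j Hj ->].
  have : (0, j.+1) \in [seq unord e | e <- gedges (star n)].
    apply/mapP; exists (0, j.+1); last by rewrite /unord /= min0n max0n.
    by apply/mapP; exists j.
  rewrite -(perm_mem Hperm) => /mapP[[e1 e2] He Hue].
  have Hlt := adj_lt Hwf (introT (adjP _ _ _) (ex_intro2 _ _ (e1,e2) He (or_introl erefl))).
  case: Hlt => l1 l2.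
  have : unord (f e1, f e2) = unord (0, j.+1) by rewrite /= -Hue /unord /= min0n max0n.
  case/unordP => -[h1 h2].
    exists e2; split; first exact: h2.
    split; first by rewrite /C h2 andbF.
    exists e1; split; first by rewrite /C l1 h1.
    by apply/adjP; exists (e1, e2) => //; left.
  exists e1; split; first exact: h1.
  split; first by rewrite /C h1 andbF.
  exists e2; split; first by rewrite /C l2 h2.
  by apply/adjP; exists (e1, e2) => //; right.
have [N [HNm HNq]] := choice_map hch.
exists N; split => //.
- apply: (@map_uniq _ _ f); rewrite HNm map_inj_uniq ?iota_uniq //; exact: succn_inj.
- by rewrite -(size_map f) HNm size_map size_iota.
Qed.

Lemma steps_wf G G' : steps G G' -> wf G -> wf G'.
Proof. by elim=> // G1 G2 G3 Hs _ IH Hw; apply: IH; apply: step_wf Hs Hw. Qed.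

Lemma steps_model G G' n : steps G G' -> wf G -> (wf G' -> model G' n) -> model G n.
Proof.
elim=> {G G'} [G|G1 G2 G3 Hs _ IH] Hwf Hm; first exact: Hm Hwf.
apply: (step_model Hs Hwf); apply: IH => //; exact: (step_wf Hs Hwf).
Qed.

Lemma minor_star_model H n : wf H -> minor (star n) H -> model H n.
Proof.
move=> Hwf [H' [Hs Hi]]; apply: steps_model Hs Hwf _ => Hw'.
exact: iso_star_model Hw' Hi.
Qed.

Lemma path_pot G x y q (f : nat -> nat) :
  (forall a b, adj G a b -> f b <= (f a).+1) -> is_path G x y q ->
  forall j, j <= size q.2 -> f (nth 0 q.1 j) <= f x + j /\ f y <= f (nth 0 q.1 j) + (size q.2 - j).
Proof.
move=> Hf Hp; have [_ [_ [_ [_ [_ [H0 Hl]]]]]] := Hp.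
have pa := path_adj Hp.
have up : forall j, j <= size q.2 -> f (nth 0 q.1 j) <= f x + j.
  elim=> [|j IH] Hj; first by rewrite -H0 addn0.
  have := Hf _ _ (pa _ Hj); have := IH (ltnW Hj); lia.
have down : forall t, t <= size q.2 -> f y <= f (nth 0 q.1 (size q.2 - t)) + t.
  elim=> [|t IH] Ht; first by rewrite subn0 Hl addn0.
  have h1 : size q.2 - t.+1 < size q.2 by lia.
  have h2 : (size q.2 - t.+1).+1 = size q.2 - t by lia.
  have := pa _ h1; rewrite h2 => /Hf.
  have := IH (ltnW Ht); lia.
move=> j Hj; split; first exact: up.
have := down (size q.2 - j) (leq_subr _ _).
by rewrite (_ : size q.2 - (size q.2 - j) = j) //; lia.
Qed.

Lemma usp_pot G (P : seq nat * seq nat) (f : nat -> nat) :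
  uniq (map unord (gedges G)) ->
  (forall a b, adj G a b -> f b <= (f a).+1) ->
  is_path G (nth 0 P.1 0) (nth 0 P.1 (size P.2)) P ->
  f (nth 0 P.1 0) = 0 -> f (nth 0 P.1 (size P.2)) = size P.2 ->
  (forall w j, 0 < j < size P.2 -> f w = j -> w = nth 0 P.1 j) ->
  is_usp G P.
Proof.
case: P => vs es /= Hu Hf Hp fx fy Hmid.
have [Hsz [_ [_ [Hes [Hedge _]]]]] := Hp.
rewrite /is_usp /=; split => // [q Hq|q Hq].
  have := (path_pot Hf Hq (leqnn _)).1.
  have [Hqs [_ [_ [_ [_ [_ Hql]]]]]] := Hq.
  by rewrite Hql fy fx /pnv /= Hqs Hsz.
rewrite /pnv /= => Hs.
case: q Hq Hs => qv qe Hq /= Hs.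
have [Hqs [_ [_ [Hqe [Hqedge [Hq0 Hql]]]]]] := Hq.
simpl in *.
have Hse : size qe = size es by lia.
have qvj : forall j, j <= size es -> nth 0 qv j = nth 0 vs j.
  move=> j Hj.
  have Hj2 : j <= size qe by rewrite Hse.
  have [h1 h2] := path_pot Hf Hq Hj2.
  rewrite /= Hse fx fy in h1 h2.
  case: j Hj h1 h2 Hj2 => [|j] Hj h1 h2 _; first by rewrite Hq0.
  case: (ltnP j.+1 (size es)) => hj; last first.
    have -> : j.+1 = size es by lia.
    by move: Hql; rewrite Hse.
  by apply: Hmid => //; lia.
have Eqv : qv = vs.
  apply: (@eq_from_nth _ 0); first by rewrite Hqs Hsz Hse.
  by move=> j Hj; apply: qvj; lia.
subst qv.
have Eqe : qe = es.
  apply: (@eq_from_nth _ 0) => // j Hj.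
  have Hj' : j < size es by rewrite -Hse.
  have e1 := Hqedge j Hj; have e2 := Hedge j Hj'.
  have i1 : nth 0 qe j < size (gedges G) by move/allP: Hqe; apply; rewrite mem_nth.
  have i2 : nth 0 es j < size (gedges G) by move/allP: Hes; apply; rewrite mem_nth.
  apply/eqP; rewrite -(nth_uniq (unord (0,0)) _ _ Hu) ?size_map //.
  by rewrite !(nth_map (0,0)) // -!/(nth_edge G _) e1 e2.
by rewrite Eqe.
Qed.

Lemma lip_edges G (f : nat -> nat) :
  (forall e, e \in gedges G -> f e.2 <= (f e.1).+1 /\ f e.1 <= (f e.2).+1) ->
  forall a b, adj G a b -> f b <= (f a).+1.
Proof.
move=> Hf a b /adjP[e He [] E]; subst e; have := Hf _ He; case => //=.
Qed.

Lemma iso_refl G : iso G G.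
Proof.
split => //; exists id; split => //; split => //.
Qed.

Lemma star_memP n e : reflect (exists2 j, j < n & e = (0, j.+1)) (e \in gedges (star n)).
Proof.
apply: (iffP mapP) => -[j Hj ->]; exists j => //.
  by move: Hj; rewrite mem_iota.
by rewrite mem_iota.
Qed.

Lemma nth_star n i : i < n -> nth_edge (star n) i = (0, i.+1).
Proof. by move=> Hi; rewrite /nth_edge /= (nth_map 0) ?size_iota // nth_iota. Qed.

Lemma size_star n : size (gedges (star n)) = n.
Proof. by rewrite /= size_map size_iota. Qed.

Lemma wf_star n : wf (star n).
Proof.
rewrite /wf /=; apply/allP => e /mapP[j]; rewrite mem_iota /edge_ok => Hj -> /=.
lia.
Qed.

Lemma unord_star n : map unord (gedges (star n)) = gedges (star n).
Proof.
rewrite /= -map_comp; apply: eq_map => j /=.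
by rewrite /unord /= min0n max0n.
Qed.

Lemma uniq_star n : uniq (gedges (star n)).
Proof.
by rewrite /= map_inj_uniq ?iota_uniq // => a b [].
Qed.

Lemma usp_star n : 2 <= n -> usp_is (star n) 3.
Proof.
move=> Hn.
have Hm : model (star n) n.
  by apply: minor_star_model; [exact: wf_star | exists (star n); split; [constructor|exact: iso_refl]].
split; last first.
  move=> p Hp; have := lower_bound (wf_star n) Hp Hm.
  case: Hp => Hpp _ _; have := path_size Hpp; rewrite /pnv /=; lia.
exists ([:: 1; 0; 2], [:: 0; 1]); split => //.
pose f w := if w == 1 then 0 else if w == 0 then 1 else 2.
have Hp : is_path (star n) 1 2 ([:: 1; 0; 2], [:: 0; 1]).
  rewrite /is_path /=; do !split => //.
  - by rewrite /= ?andbT; apply/andP; split; lia.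
  - by rewrite size_star; apply/andP; split; lia.
  - case=> [|[|i]] //= _; rewrite nth_star //; lia.
apply: (@usp_pot _ _ f) => //.
- by rewrite unord_star uniq_star.
- apply: lip_edges => e /star_memP[j Hj ->] /=; rewrite /f /=.
  by case: j Hj => [|[|j]] //.
- move=> w j /andP[h1 h2]; have -> : j = 1 by move: h2 => /=; lia.
  by rewrite /f; case: ifP => // _; case: ifP => [/eqP //|].
Qed.

Lemma rm_nth_split (T : eqType) (x0 : T) i (s : seq T) : i < size s ->
  exists t d, [/\ s = t ++ nth x0 s i :: d & rm_nth i s = t ++ d].
Proof.
move=> Hi; exists (take i s), (drop i.+1 s); split => //.
by rewrite -drop_nth // cat_take_drop.
Qed.

Lemma rm_nth_mem (T : eqType) (x0 : T) i (s : seq T) x : uniq s -> i < size s ->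
  (x \in rm_nth i s) = (x \in s) && (x != nth x0 s i).
Proof.
move=> Hu Hi; have [t [d [E ->]]] := rm_nth_split x0 Hi.
move: (nth x0 s i) E => y E; subst s.
have : uniq (y :: t ++ d) by move: Hu; rewrite -cat1s uniq_catCA.
rewrite /= => /andP[yn _].
rewrite !mem_cat inE; case: (eqVneq x y) => [->|_]; last by rewrite andbT.
by rewrite andbF; apply/negP; rewrite -mem_cat; apply/negP.
Qed.

Lemma rm_nth_uniq (T : eqType) i (s : seq T) : uniq s -> i < size s -> uniq (rm_nth i s).
Proof.
move=> Hu Hi; case: s Hu Hi => [|x0 s'] //; set s := x0 :: s' => Hu Hi.
have [t [d [E ->]]] := rm_nth_split x0 Hi.
move: (nth x0 s i) E => y E; rewrite E in Hu.
have : uniq (y :: t ++ d) by move: Hu; rewrite -cat1s uniq_catCA.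
by rewrite /= => /andP[].
Qed.

Lemma star_step n H1 : 2 <= n -> minor_step (star n) H1 ->
  H1 = star n.-1 \/ exists2 i, i < n & H1 = Graph n.+1 (rm_nth i (gedges (star n))).
Proof.
move=> Hn; move ES: (star n) => S Hs; case: Hs ES => {S H1}.
- move=> G v Hv H1 Hall ES; subst G; exfalso.
  case: v Hv Hall => [|v] Hv /allP Hall.
    have Hin : (0,1) \in gedges (star n) by apply/star_memP; exists 0 => //; lia.
    by have := Hall _ Hin; rewrite /= ?eqxx.
  have Hin : (0,v.+1) \in gedges (star n).
    by apply/star_memP; exists v => //; move: Hv => /=; lia.
  by have := Hall _ Hin; rewrite /= ?eqxx ?andbF.
- move=> G i Hi ES; subst G; right; exists i => //.
  by move: Hi; rewrite size_star.
- move=> G i Hi Hnp u v ren ES; subst G; left.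
  move: Hi; rewrite size_star => Hi.
  have Hu : u = 0 by rewrite /u nth_star.
  have Hv : v = i.+1 by rewrite /v nth_star.
  rewrite /star /=; congr Graph; first lia.
  rewrite /rm_nth -map_take -map_drop take_iota drop_iota map_cat -!map_comp.
  have -> : minn i n = i by lia.
  have -> : iota 0 n.-1 = iota 0 i ++ iota i (n.-1 - i) by rewrite -iotaD; congr iota; lia.
  rewrite add0n (_ : i.+1 = 1 + i) // iotaDl -map_comp (_ : n - (1 + i) = n.-1 - i); last by lia.
  rewrite map_cat; congr (_ ++ _); apply/eq_in_map => j; rewrite mem_iota => Hj /=;
    rewrite /ren /shiftv Hu Hv; repeat case: ifP; try lia; move=> *; congr pair; lia.
Qed.

Definition pend n i a := Graph n.+1 (rm_nth i (gedges (star n)) ++ [:: (a, i.+1)]).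

Lemma memL n i e : i < n ->
  (e \in rm_nth i (gedges (star n))) = (e \in gedges (star n)) && (e != (0, i.+1)).
Proof.
move=> Hi; rewrite (rm_nth_mem (0,0)) ?uniq_star ?size_star //.
by rewrite -/(nth_edge (star n) i) nth_star.
Qed.

Lemma memL0 n i c : i < n -> 0 < c <= n -> c != i.+1 -> (0, c) \in rm_nth i (gedges (star n)).
Proof.
move=> Hi Hc Hci; rewrite memL // -[c]prednK; last by lia.
apply/andP; split; first by apply/star_memP; exists c.-1 => //; lia.
by apply/negP => /eqP [] E; move: Hci; rewrite -E prednK ?eqxx //; lia.
Qed.

Lemma memLP n i e : i < n -> e \in rm_nth i (gedges (star n)) ->
  exists c, [/\ e = (0, c), 0 < c <= n & c != i.+1].
Proof.
move=> Hi; rewrite memL // => /andP[/star_memP[j Hj ->] Hne].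
exists j.+1; split; [by [] | lia |].
by apply/negP => /eqP E; move: Hne; rewrite E eqxx.
Qed.


Lemma pend_wf n i a : i < n -> 0 < a <= n -> a != i.+1 -> wf (pend n i a).
Proof.
move=> Hi Ha Hai; rewrite /wf /=; apply/allP => e; rewrite mem_cat inE => /orP[].
  by move/(memLP Hi) => [c [-> Hc _]]; rewrite /edge_ok /=; lia.
by move/eqP => ->; rewrite /edge_ok /=; move: Hai; lia.
Qed.

Lemma pend_model n i a : i < n -> 0 < a <= n -> a != i.+1 -> model (pend n i a) n.-1.
Proof.
move=> Hi Ha Hai.
have A0a : adj (pend n i a) 0 a.
  by apply/adjP; exists (0, a); [rewrite mem_cat memL0 | left].
have Aap : adj (pend n i a) a i.+1.
  by apply/adjP; exists (a, i.+1); [rewrite mem_cat mem_seq1 eqxx orbT | left].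
exists (fun x => (x == 0) || (x == a)); split.
  move=> A [x /andP[Cx Ax]] [y /andP[Cy Ay]].
  have xy : x != y by apply/negP => /eqP E; subst; rewrite Ax in Ay.
  case/orP: Cx => /eqP Ex; case/orP: Cy => /eqP Ey; subst => //.
  all: try by move: xy; rewrite ?eqxx.
  all: try by exists 0, a; rewrite Ax Ay A0a ?eqxx /= ?orbT.
  all: try by exists a, 0; rewrite Ax Ay adj_sym A0a ?eqxx /= ?orbT.
exists [seq c <- iota 1 n | c != a]; split.
- by rewrite filter_uniq ?iota_uniq.
- rewrite size_filter.
  have := count_predC (fun c => c == a) (iota 1 n).
  have e1 : count (fun c => c == a) (iota 1 n) = 1.
    rewrite (_ : count _ _ = count_mem a (iota 1 n)); last by apply: eq_count => c.
    by rewrite count_uniq_mem ?iota_uniq // mem_iota; move: Ha => /andP[h1 h2]; rewrite h1 /= add1n ltnS h2.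
  have e2 : count (fun c => c != a) (iota 1 n) = count (predC (fun c => c == a)) (iota 1 n).
    by apply: eq_count.
  rewrite e1 e2 size_iota; lia.
- move=> y; rewrite mem_filter mem_iota => /andP[ya Hy].
  split; first by rewrite negb_or ya andbT; lia.
  case: (eqVneq y i.+1) => [->|yi].
    by exists a; rewrite eqxx orbT.
  exists 0; split => //; apply/adjP; exists (0, y); last by left.
  by rewrite mem_cat memL0 //; lia.
Qed.

Lemma pend_usp n i a b : 3 <= n -> i < n -> 0 < a <= n -> a != i.+1 ->
  0 < b <= n -> b != i.+1 -> b != a -> usp_is (pend n i a) 4.
Proof.
move=> Hn Hi Ha Hai Hb Hbi Hba.
have Hwf := pend_wf Hi Ha Hai.
have Hm := pend_model Hi Ha Hai.
split; last first.
  move=> p Hp; have := lower_bound Hwf Hp Hm.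
  case: Hp => Hpp _ _; have := path_size Hpp; rewrite /pnv /=; lia.
set L := rm_nth i (gedges (star n)).
have a0 : (0, a) \in L by apply: memL0 => //; lia.
have b0 : (0, b) \in L by apply: memL0 => //; lia.
have nL : forall j, j < size L -> nth_edge (pend n i a) j = nth (0,0) L j.
  by move=> j Hj; rewrite /nth_edge /= nth_cat Hj.
exists ([:: i.+1; a; 0; b], [:: size L; index (0,a) L; index (0,b) L]); split => //.
pose f w := if w == i.+1 then 0 else if w == a then 1 else if w == 0 then 2 else 3.
apply: (@usp_pot _ _ f).
- rewrite /= map_cat.
  have -> : map unord L = L.
    rewrite -[RHS]map_id; apply/eq_in_map => e /(memLP Hi) [c [-> _ _]].
    by rewrite /unord /= min0n max0n.
  rewrite cat_uniq rm_nth_uniq ?uniq_star ?size_star //= andbT orbF.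
  apply/negP => /(memLP Hi) [c [E _ _]]; move: E; rewrite /unord /= => -[E _].
  lia.
- apply: lip_edges => e; rewrite /= mem_cat mem_seq1 => /orP[/(memLP Hi) [c [-> Hc Hci]]|/eqP ->] /=.
    rewrite /f; move: Hci Hai; repeat case: eqP; lia.
  rewrite /f; move: Hai; repeat case: eqP; lia.
- rewrite /is_path /=; do !split => //.
  + move: Hai Hba Hbi; rewrite !inE; repeat case: eqP; lia.
  + apply/and4P; split => //; lia.
  + by rewrite -/L size_cat /= addn1 ltnSn !ltnS !index_size.
  + case=> [|[|[|j]]] //= _.
    * by rewrite /nth_edge /= nth_cat ltnn subnn /= unord_sym.
    * by rewrite nL ?index_mem // nth_index // unord_sym.
    * by rewrite nL ?index_mem // nth_index.
- by rewrite /f eqxx.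
- rewrite /f /=; move: Hbi Hba Hb; repeat case: eqP; lia.
- move=> w [|[|[|j]]] //= _; rewrite /f; move: Hai; repeat case: eqP; lia.
Qed.

Lemma rm_last (T : Type) (L : seq T) x : rm_nth (size L) (L ++ [:: x]) = L.
Proof. by rewrite /rm_nth take_size_cat // drop_oversize ?cats0 // size_cat /= addn1. Qed.

Theorem corollary4p5 (k : nat) : 1 <= k ->
  spfloor_is (star (k + 2)) k /\
  (forall G, wf G -> proper_minor G (star (k + 2)) -> ~ spfloor_is G k).
Proof.
move=> Hk; split.
  split.
    exists (star (k+2)); split; first exact: wf_star.
    split; first by exists (star (k+2)); split; [constructor | exact: iso_refl].
    exists 3; split; first by apply: usp_star; lia.
    by rewrite /=; lia.
  move=> H s Hwf Hm [M [[[p [Hp pp]] _] ->]].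
  have := lower_bound Hwf Hp (minor_star_model Hwf Hm); rewrite pp; lia.
move=> G HG [H1 [H' [Hst [Hs Hi]]]] [_ Hall].
have Hn : 2 <= k + 2 by lia.
case: (star_step Hn Hst) => [E|[i Hi' E]]; subst H1.
  have := Hall (star (k+2).-1) (k-1) (wf_star _) (ex_intro _ H' (conj Hs Hi)).
  have Hsp : sp_is (star (k + 2).-1) (k - 1).
    exists 3; split; first by apply: usp_star; lia.
    by rewrite /=; lia.
  by move/(_ Hsp); lia.
have [a [b [Ha Hai Hb Hbi Hba]]] : exists a b,
    [/\ 0 < a <= k+2, a != i.+1, 0 < b <= k+2, b != i.+1 & b != a].
  clear -Hi' Hk; case: i Hi' => [|[|i]] Hi'.
  - by exists 2, 3; split => //; lia.
  - by exists 1, 3; split => //; lia.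
  - by exists 1, 2; split => //; lia.
have Est : minor_step (pend (k+2) i a) (Graph (k+2).+1 (rm_nth i (gedges (star (k+2))))).
  have := @DelEdge (pend (k+2) i a) (size (rm_nth i (gedges (star (k+2))))).
  by rewrite /= rm_last size_cat addn1 ltnSn => /(_ isT).
have Hmin : minor G (pend (k+2) i a).
  by exists H'; split => //; apply: steps_cons Est Hs.
have Hsp : sp_is (pend (k+2) i a) (k - 1).
  exists 4; split; first by apply: (@pend_usp _ _ _ b) => //; lia.
  by rewrite /=; lia.
have := Hall _ _ (pend_wf Hi' Ha Hai) Hmin Hsp; lia.
Qed.
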